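(* Let $z$ lie in the upper half-plane and let $E_4,\Delta_{24}$ and $\rho_n$ be as in the context. Then for every positive integer $n$, $$\rho_n(z)=\sum_{i=0}^{\lfloor n/3\rfloor}\frac{2n+3}{2i+1}\binom{n-i}{2i}2^{8i}\Delta_{24}(z)^iE_4(z)^{n-3i}.$$
   Context: For $z$ with $\mathrm{Im}(z)>0$ put $q=e^{\pi\sqrt{-1}z}$ and define $\vartheta_2(z)=\sum_{m\in\mathbb{Z}}q^{(m+1/2)^2}$, $\vartheta_3(z)=\sum_{m\in\mathbb{Z}}q^{m^2}$, $\vartheta_4(z)=\sum_{m\in\mathbb{Z}}(-q)^{m^2}$. Define $E_4(z)=\frac12(\vartheta_2(z)^8+\vartheta_3(z)^8+\vartheta_4(z)^8)$, $\Delta_{24}(z)=\left(\frac{\vartheta_2(z)\vartheta_3(z)\vartheta_4(z)}{2}\right)^8$, and for a nonnegative integer $n$, $$\rho_n(z)=\frac{\vartheta_3(z)^{8(n+1)+4}-\vartheta_2(z)^{8(n+1)+4}-\vartheta_4(z)^{8(n+1)+4}}{(\vartheta_2(z)\vartheta_3(z)\vartheta_4(z))^4}.$$ *)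

(* Defs.v *)
From Stdlib Require Import Reals.
From Coquelicot Require Import Coquelicot.

Open Scope C_scope.

Definition Cexp (w : C) : C :=
  (exp (Re w) * cos (Im w), exp (Re w) * sin (Im w))%R.

Definition CSeries (u : nat -> C) : C :=
  (Series (fun k => Re (u k)), Series (fun k => Im (u k))).

(** Sum over all integers: a_0 + sum_{k>=1} (a_k + a_{-k})
    (the series in question are absolutely convergent). *)
Definition Zsum (a : Z -> C) : C :=
  a 0%Z + CSeries (fun k => a (Z.of_nat (S k)) + a (- Z.of_nat (S k))%Z).

(** q^r := exp(pi i z r) with q = exp(pi i z). *)
Definition qpow (z : C) (r : R) : C := Cexp (RtoC PI * Ci * z * RtoC r).

Definition theta2 (z : C) : C :=
  Zsum (fun m => qpow z ((IZR m + /2) ^ 2)%R).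
Definition theta3 (z : C) : C :=
  Zsum (fun m => qpow z (IZR m ^ 2)%R).
(** (-q)^(m^2) = (-1)^(m^2) q^(m^2) (integer exponent). *)
Definition theta4 (z : C) : C :=
  Zsum (fun m => RtoC ((-1) ^ Z.to_nat (m * m)) * qpow z (IZR m ^ 2)%R).

Definition E4 (z : C) : C :=
  / 2 * (Cpow (theta2 z) 8 + Cpow (theta3 z) 8 + Cpow (theta4 z) 8).

Definition Delta24 (z : C) : C :=
  Cpow (theta2 z * theta3 z * theta4 z / 2) 8.

Definition rho (n : nat) (z : C) : C :=
  (Cpow (theta3 z) (8 * (n + 1) + 4) - Cpow (theta2 z) (8 * (n + 1) + 4)
     - Cpow (theta4 z) (8 * (n + 1) + 4))
  / Cpow (theta2 z * theta3 z * theta4 z) 4.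

Definition binomR (n k : nat) : R := Binomial.C n k.

(* Main.v *)
Require Import Defs.
From Stdlib Require Import Reals.
From Coquelicot Require Import Coquelicot.
From Stdlib Require Import Lia Lra ZArith FunctionalExtensionality.
Open Scope C_scope.

Lemma pow_le_anti (r : R) (a b : nat) : (0 <= r <= 1)%R -> (a <= b)%nat -> (r ^ b <= r ^ a)%R.
Proof.
  intros Hr Hab. induction Hab. lra.
  simpl. apply Rle_trans with (r ^ m)%R; auto.
  pose proof (pow_le r m (proj1 Hr)). nra.
Qed.

Fixpoint rsum (u : nat -> R) (N : nat) : R :=
  match N with O => 0%R | S N' => (rsum u N' + u N')%R end.

Lemma real_tail (u : nat -> R) (B r : R) :
  (0 <= r < 1)%R -> (forall k, Rabs (u k) <= B * r ^ k)%R ->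
  forall N, (Rabs (Series u - rsum u N) <= B * r ^ N / (1 - r))%R.
Proof.
  intros Hr Hu N.
  assert (Hex : ex_series u).
  { apply (@ex_series_le R_AbsRing R_CompleteNormedModule) with (b := fun k => (B * r ^ k)%R); auto.
    apply (ex_series_scal_l B (fun k => r ^ k)%R). apply ex_series_geom. rewrite Rabs_pos_eq; lra. }
  assert (Hsplit : Series u = (rsum u N + Series (fun k => u (N + k)%nat))%R).
  { destruct N as [|N]. simpl. rewrite Rplus_0_l. apply Series_ext. reflexivity.
    rewrite (Series_incr_n u (S N)) by (lia || auto). simpl pred. f_equal.
    clear. induction N. simpl. ring. change (sum_f_R0 u (S N)) with (sum_f_R0 u N + u (S N))%R. rewrite IHN. simpl. ring. }
  rewrite Hsplit.
  replace (rsum u N + Series (fun k => u (N + k)%nat) - rsum u N)%R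
    with (Series (fun k => u (N + k)%nat)) by ring.
  assert (Hg2 : ex_series (fun k => B * r ^ N * r ^ k)%R).
  { apply (ex_series_scal_l (B * r ^ N)%R (fun k => r ^ k)%R). apply ex_series_geom. rewrite Rabs_pos_eq; lra. }
  assert (Hb : forall k, (Rabs (u (N + k)%nat) <= B * r ^ N * r ^ k)%R).
  { intro k. rewrite Rmult_assoc, <- pow_add. apply Hu. }
  assert (Hab : ex_series (fun k => Rabs (u (N + k)%nat))).
  { apply (@ex_series_le R_AbsRing R_CompleteNormedModule) with (b := fun k => (B * r ^ N * r ^ k)%R); auto.
    intro k. unfold norm; simpl. unfold abs; simpl. rewrite Rabs_Rabsolu. apply Hb. }
  eapply Rle_trans. apply Series_Rabs; auto.
  eapply Rle_trans. apply Series_le. intro k; split; [apply Rabs_pos| apply Hb]. exact Hg2.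
  rewrite Series_scal_l, Series_geom by (rewrite Rabs_pos_eq; lra).
  unfold Rdiv. lra.
Qed.

Lemma Cmod_le_ReIm (w : C) : (Cmod w <= Rabs (Re w) + Rabs (Im w))%R.
Proof.
  destruct w as [x y]. unfold Cmod, Re, Im; simpl.
  rewrite <- (sqrt_Rsqr (Rabs x + Rabs y)) by (pose proof (Rabs_pos x); pose proof (Rabs_pos y); lra).
  apply sqrt_le_1_alt. pose proof (Rsqr_abs x). pose proof (Rsqr_abs y).
  pose proof (Rabs_pos x); pose proof (Rabs_pos y). unfold Rsqr in *. nra.
Qed.

Lemma Im_le_Cmod (w : C) : (Rabs (Im w) <= Cmod w)%R.
Proof.
  destruct w as [x y]. unfold Cmod, Im; simpl.
  rewrite <- sqrt_Rsqr_abs. apply sqrt_le_1_alt. unfold Rsqr. nra.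
Qed.

Lemma Cmod_tri3 (a b c d : C) : (Cmod (a - d) <= Cmod (a - b) + Cmod (b - c) + Cmod (c - d))%R.
Proof.
  replace (a - d) with ((a - b) + ((b - c) + (c - d))) by ring.
  eapply Rle_trans. apply Cmod_triangle. pose proof (Cmod_triangle (b - c) (c - d)). lra.
Qed.

Lemma Cmod_sym (a b : C) : Cmod (a - b) = Cmod (b - a).
Proof. replace (a - b) with (- (b - a)) by ring. apply Cmod_opp. Qed.

Lemma Cmod_minus_le (a b : C) : (Cmod (a - b) <= Cmod a + Cmod b)%R.
Proof. unfold Cminus. rewrite <- (Cmod_opp b). apply Cmod_triangle. Qed.

Lemma eq_geom (x y : C) (K r : R) : (0 <= r < 1)%R ->
  (forall N, Cmod (x - y) <= K * r ^ N)%R -> x = y.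
Proof.
  intros Hr H.
  assert (Hd : Cmod (x - y) = 0%R).
  { destruct (Rle_lt_dec (Cmod (x - y)) 0). pose proof (Cmod_ge_0 (x - y)); lra.
    exfalso. assert (HK : (0 < K)%R).
    { specialize (H O). simpl in H. lra. }
    destruct (pow_lt_1_zero r ltac:(rewrite Rabs_pos_eq; lra) (Cmod (x - y) / K)) as [N HN].
    apply Rdiv_lt_0_compat; lra.
    specialize (HN N (le_n _)). rewrite Rabs_pos_eq in HN by (apply pow_le; lra).
    specialize (H N). apply Rmult_lt_compat_l with (r := K) in HN; auto.
    replace (K * (Cmod (x - y) / K))%R with (Cmod (x - y)) in HN by (field; lra). lra. }
  apply Cmod_eq_0 in Hd. replace x with ((x - y) + y) by ring. rewrite Hd. ring.
Qed.

Fixpoint SC (N : nat) (f : Z -> C) : C :=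
  match N with
  | O => f 0%Z
  | S N' => SC N' f + (f (Z.of_nat (S N')) + f (- Z.of_nat (S N'))%Z)
  end.

Fixpoint SR (N : nat) (f : Z -> R) : R :=
  match N with
  | O => f 0%Z
  | S N' => (SR N' f + (f (Z.of_nat (S N')) + f (- Z.of_nat (S N'))%Z))%R
  end.

Definition GDb (K r : R) (f : Z -> C) : Prop :=
  (0 <= K)%R /\ (0 < r < 1)%R /\ forall m, (Cmod (f m) <= K * r ^ (Z.abs_nat m))%R.

Lemma Zsum_tail (f : Z -> C) K r : GDb K r f ->
  forall N, (Cmod (Zsum f - SC N f) <= 4 * K * r ^ (S N) / (1 - r))%R.
Proof.
  intros [HK [Hr Hf]] N.
  set (g := fun k : nat => f (Z.of_nat (S k)) + f (- Z.of_nat (S k))%Z).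
  assert (Hg : forall k, (Cmod (g k) <= 2 * K * r * r ^ k)%R).
  { intro k. unfold g. eapply Rle_trans. apply Cmod_triangle.
    pose proof (Hf (Z.of_nat (S k))). pose proof (Hf (- Z.of_nat (S k))%Z).
    replace (Z.abs_nat (Z.of_nat (S k))) with (S k) in * by lia.
    replace (Z.abs_nat (- Z.of_nat (S k))) with (S k) in * by lia.
    simpl in *. lra. }
  assert (HRe : forall N, Re (SC N f) = (Re (f 0%Z) + rsum (fun k => Re (g k)) N)%R).
  { induction N0. simpl. ring.
    change (Re (SC (S N0) f)) with (Re (SC N0 f) + Re (f (Z.of_nat (S N0)) + f (- Z.of_nat (S N0))%Z))%R.
    rewrite IHN0. simpl rsum. rewrite Rplus_assoc. reflexivity. }
  assert (HIm : forall N, Im (SC N f) = (Im (f 0%Z) + rsum (fun k => Im (g k)) N)%R).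
  { induction N0. simpl. ring.
    change (Im (SC (S N0) f)) with (Im (SC N0 f) + Im (f (Z.of_nat (S N0)) + f (- Z.of_nat (S N0))%Z))%R.
    rewrite IHN0. simpl rsum. rewrite Rplus_assoc. reflexivity. }
  eapply Rle_trans. apply Cmod_le_ReIm.
  assert (E1 : Re (Zsum f - SC N f) = (Series (fun k => Re (g k)) - rsum (fun k => Re (g k)) N)%R).
  { change (Re (Zsum f) - Re (SC N f) = Series (fun k => Re (g k)) - rsum (fun k => Re (g k)) N)%R.
    rewrite HRe. unfold Zsum. fold g. change (Re (f 0%Z + CSeries g)) with (Re (f 0%Z) + Series (fun k => Re (g k)))%R. ring. }
  assert (E2 : Im (Zsum f - SC N f) = (Series (fun k => Im (g k)) - rsum (fun k => Im (g k)) N)%R).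
  { change (Im (Zsum f) - Im (SC N f) = Series (fun k => Im (g k)) - rsum (fun k => Im (g k)) N)%R.
    rewrite HIm. unfold Zsum. fold g. change (Im (f 0%Z + CSeries g)) with (Im (f 0%Z) + Series (fun k => Im (g k)))%R. ring. }
  rewrite E1, E2.
  pose proof (real_tail (fun k => Re (g k)) (2 * K * r) r ltac:(lra)
     (fun k => Rle_trans _ _ _ (re_le_Cmod _) (Hg k)) N).
  pose proof (real_tail (fun k => Im (g k)) (2 * K * r) r ltac:(lra)
     (fun k => Rle_trans _ _ _ (Im_le_Cmod _) (Hg k)) N).
  simpl pow. unfold Rdiv in *. lra.
Qed.

Lemma Zsum_ext (f g : Z -> C) : (forall m, f m = g m) -> Zsum f = Zsum g.
Proof. intro H. apply functional_extensionality in H. now subst. Qed.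

Lemma GDb_K (K r : R) f : GDb K r f -> (0 < r < 1)%R /\ (0 <= K)%R.
Proof. intros [? [? ?]]; auto. Qed.

Lemma Zsum_tailN (f : Z -> C) K r : GDb K r f ->
  forall N, (Cmod (Zsum f - SC N f) <= (4 * K / (1 - r)) * r ^ N)%R.
Proof.
  intros H N. pose proof (Zsum_tail f K r H N) as T. destruct H as [HK [Hr _]].
  eapply Rle_trans. exact T. simpl pow. unfold Rdiv.
  assert (0 < / (1 - r))%R by (apply Rinv_0_lt_compat; lra).
  pose proof (pow_le r N ltac:(lra)).
  assert (0 <= K * r ^ N * / (1 - r))%R by (apply Rmult_le_pos; [apply Rmult_le_pos|]; lra).
  nra.
Qed.

Lemma Zsum_bound (f : Z -> C) K r : GDb K r f -> (Cmod (Zsum f) <= K * (1 + 4 / (1 - r)))%R.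
Proof.
  intros H. pose proof (Zsum_tailN f K r H 0) as T. destruct H as [HK [Hr Hf]].
  simpl in T. specialize (Hf 0%Z). simpl in Hf.
  replace (Zsum f) with ((Zsum f - f 0%Z) + f 0%Z) by ring.
  eapply Rle_trans. apply Cmod_triangle. unfold Rdiv in *. lra.
Qed.

Lemma SC_scal (c : C) f N : SC N (fun m => c * f m) = c * SC N f.
Proof. induction N; simpl; [reflexivity|]. rewrite IHN. ring. Qed.

Lemma GDb_scal (c : C) K r f : GDb K r f -> GDb (Cmod c * K) r (fun m => c * f m).
Proof.
  intros [HK [Hr Hf]]. split; [apply Rmult_le_pos; auto; apply Cmod_ge_0|split; auto].
  intro m. rewrite Cmod_mult, Rmult_assoc. apply Rmult_le_compat_l. apply Cmod_ge_0. auto.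
Qed.

Lemma Zsum_scal_l (c : C) f K r : GDb K r f -> Zsum (fun m => c * f m) = c * Zsum f.
Proof.
  intros H. pose proof (GDb_scal c K r f H) as H2.
  destruct (GDb_K _ _ _ H) as [Hr HK].
  apply (eq_geom _ _ (4 * (Cmod c * K) / (1 - r) + Cmod c * (4 * K / (1 - r))) r ltac:(lra)).
  intro N.
  replace (Zsum (fun m => c * f m) - c * Zsum f) with
    ((Zsum (fun m => c * f m) - SC N (fun m => c * f m)) + c * (SC N f - Zsum f))
    by (rewrite SC_scal; ring).
  eapply Rle_trans. apply Cmod_triangle. rewrite Cmod_mult.
  pose proof (Zsum_tailN _ _ _ H2 N). pose proof (Zsum_tailN _ _ _ H N).
  rewrite Cmod_sym in H1.
  pose proof (Cmod_ge_0 c).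
  assert (Cmod c * Cmod (SC N f - Zsum f) <= Cmod c * (4 * K / (1 - r) * r ^ N))%R
    by (apply Rmult_le_compat_l; auto).
  lra.
Qed.

Lemma Zsum_scal_r (c : C) f K r : GDb K r f -> Zsum (fun m => f m * c) = Zsum f * c.
Proof.
  intros H. rewrite Cmult_comm, <- (Zsum_scal_l c f K r H). apply Zsum_ext. intro; ring.
Qed.

Lemma GDb_shift K r f k : GDb K r f -> GDb (K / r ^ (Z.abs_nat k)) r (fun m => f (m + k)%Z).
Proof.
  intros [HK [Hr Hf]].
  assert (Hp : (0 < r ^ Z.abs_nat k)%R) by (apply pow_lt; lra).
  split; [apply Rmult_le_pos; auto; left; apply Rinv_0_lt_compat; auto|split; auto].
  intro m. eapply Rle_trans. apply Hf.
  unfold Rdiv. rewrite Rmult_assoc. apply Rmult_le_compat_l; auto.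
  apply Rmult_le_reg_r with (r ^ Z.abs_nat k)%R; auto.
  replace ((/ r ^ Z.abs_nat k * r ^ Z.abs_nat m) * r ^ Z.abs_nat k)%R with (r ^ Z.abs_nat m)%R by (field; lra). rewrite <- pow_add.
  apply pow_le_anti. lra. lia.
Qed.

Lemma SC_S N f : SC (S N) f = SC N f + (f (Z.of_nat (S N)) + f (- Z.of_nat (S N))%Z).
Proof. reflexivity. Qed.

Lemma SR_S N f : SR (S N) f = (SR N f + (f (Z.of_nat (S N)) + f (- Z.of_nat (S N))%Z))%R.
Proof. reflexivity. Qed.

Lemma SC_shift1 f N : SC N (fun m => f (m + 1)%Z) = SC N f + f (Z.of_nat (S N)) - f (- Z.of_nat N)%Z.
Proof.
  induction N. simpl. ring.
  rewrite !SC_S, IHN. cbv beta.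
  replace (Z.of_nat (S N) + 1)%Z with (Z.of_nat (S (S N))) by lia.
  replace (- Z.of_nat (S N) + 1)%Z with (- Z.of_nat N)%Z by lia.
  ring.
Qed.

Lemma Zsum_shift1 f K r : GDb K r f -> Zsum (fun m => f (m + 1)%Z) = Zsum f.
Proof.
  intros H. pose proof (GDb_shift K r f 1 H) as H2. simpl in H2.
  destruct (GDb_K _ _ _ H) as [Hr HK]. destruct H as [_ [_ Hf]].
  apply (eq_geom _ _ (4 * (K / (r * 1)) / (1 - r) + 4 * K / (1 - r) + K + K) r ltac:(lra)).
  intro N.
  replace (Zsum (fun m => f (m + 1)%Z) - Zsum f) with
    ((Zsum (fun m => f (m + 1)%Z) - SC N (fun m => f (m + 1)%Z)) + (SC N f - Zsum f)
      + (f (Z.of_nat (S N)) - f (- Z.of_nat N)%Z))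
    by (rewrite SC_shift1; ring).
  pose proof (Zsum_tailN _ _ _ H2 N). pose proof (Zsum_tailN f K r (conj HK (conj Hr Hf)) N).
  rewrite Cmod_sym in H0.
  pose proof (Hf (Z.of_nat (S N))). pose proof (Hf (- Z.of_nat N)%Z).
  replace (Z.abs_nat (Z.of_nat (S N))) with (S N) in * by lia.
  replace (Z.abs_nat (- Z.of_nat N)) with N in * by lia.
  assert (r ^ S N <= r ^ N)%R by (apply pow_le_anti; [lra|lia]).
  pose proof (Cmod_minus_le (f (Z.of_nat (S N))) (f (- Z.of_nat N)%Z)).
  pose proof (Cmod_triangle ((Zsum (fun m => f (m + 1)%Z) - SC N (fun m => f (m + 1)%Z)) + (SC N f - Zsum f))
     (f (Z.of_nat (S N)) - f (- Z.of_nat N)%Z)).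
  pose proof (Cmod_triangle (Zsum (fun m => f (m + 1)%Z) - SC N (fun m => f (m + 1)%Z)) (SC N f - Zsum f)).
  assert (K * r ^ S N <= K * r ^ N)%R by (apply Rmult_le_compat_l; auto).
  rewrite !Rmult_plus_distr_r. lra.
Qed.

Lemma Zsum_shift_nat f K r : GDb K r f -> forall n : nat, Zsum (fun m => f (m + Z.of_nat n)%Z) = Zsum f.
Proof.
  intros H n. revert K f H. induction n; intros K f H.
  - apply Zsum_ext. intro m. f_equal. lia.
  - transitivity (Zsum (fun m => (fun m' => f (m' + Z.of_nat n)%Z) (m + 1)%Z)).
    apply Zsum_ext. intro m. f_equal. lia.
    rewrite (Zsum_shift1 _ _ _ (GDb_shift K r f (Z.of_nat n) H)). eapply IHn; eauto.
Qed.

Lemma Zsum_shift f K r : GDb K r f -> forall k : Z, Zsum (fun m => f (m + k)%Z) = Zsum f.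
Proof.
  intros H k. destruct (Z.leb_spec 0 k).
  - replace k with (Z.of_nat (Z.to_nat k)) by lia. eapply Zsum_shift_nat; eauto.
  - set (n := Z.to_nat (- k)).
    pose proof (Zsum_shift_nat _ _ _ (GDb_shift K r f k H) n) as E.
    rewrite <- E. apply Zsum_ext. intro m. f_equal. unfold n. lia.
Qed.

Lemma Cmod4 (a b c d : C) : (Cmod (a + b + c - d) <= Cmod a + Cmod b + Cmod c + Cmod d)%R.
Proof.
  eapply Rle_trans. apply Cmod_minus_le.
  pose proof (Cmod_triangle (a + b) c). pose proof (Cmod_triangle a b). lra.
Qed.

Lemma SC_split f N : SC (2 * N) f = SC N (fun j => f (2 * j)%Z) + SC N (fun j => f (2 * j + 1)%Z)
   - f (2 * Z.of_nat N + 1)%Z.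
Proof.
  induction N. simpl. ring.
  replace (2 * S N)%nat with (S (S (2 * N))) by lia.
  rewrite !SC_S, IHN. cbv beta.
  replace (Z.of_nat (S (2 * N))) with (2 * Z.of_nat N + 1)%Z by lia.
  replace (- Z.of_nat (S (2 * N)))%Z with (- (2 * Z.of_nat N + 1))%Z by lia.
  replace (Z.of_nat (S (S (2 * N)))) with (2 * Z.of_nat N + 2)%Z by lia.
  replace (- Z.of_nat (S (S (2 * N))))%Z with (- (2 * Z.of_nat N + 2))%Z by lia.
  replace (2 * Z.of_nat (S N))%Z with (2 * Z.of_nat N + 2)%Z by lia.
  replace (2 * - Z.of_nat (S N))%Z with (- (2 * Z.of_nat N + 2))%Z by lia.
  replace (2 * Z.of_nat N + 2 + 1)%Z with (2 * Z.of_nat N + 3)%Z by lia.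
  replace (- (2 * Z.of_nat N + 2) + 1)%Z with (- (2 * Z.of_nat N + 1))%Z by lia.
  ring.
Qed.

Lemma Zsum_split f K r : GDb K r f ->
  Zsum f = Zsum (fun j => f (2 * j)%Z) + Zsum (fun j => f (2 * j + 1)%Z).
Proof.
  intros H. destruct (GDb_K _ _ _ H) as [Hr HK].
  assert (He : GDb K r (fun j => f (2 * j)%Z)).
  { destruct H as [_ [_ Hf]]. split; auto. split; auto. intro j. eapply Rle_trans. apply Hf.
    apply Rmult_le_compat_l; auto. apply pow_le_anti. lra. lia. }
  assert (Ho : GDb K r (fun j => f (2 * j + 1)%Z)).
  { destruct H as [_ [_ Hf]]. split; auto. split; auto. intro j. eapply Rle_trans. apply Hf.
    apply Rmult_le_compat_l; auto. apply pow_le_anti. lra. lia. }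
  apply (eq_geom _ _ (4 * K / (1 - r) + 4 * K / (1 - r) + 4 * K / (1 - r) + K) r ltac:(lra)).
  intro N.
  replace (Zsum f - (Zsum (fun j => f (2 * j)%Z) + Zsum (fun j => f (2 * j + 1)%Z))) with
    ((Zsum f - SC (2 * N) f) + (SC N (fun j => f (2 * j)%Z) - Zsum (fun j => f (2 * j)%Z))
      + (SC N (fun j => f (2 * j + 1)%Z) - Zsum (fun j => f (2 * j + 1)%Z)) - f (2 * Z.of_nat N + 1)%Z)
    by (rewrite SC_split; ring).
  eapply Rle_trans. apply Cmod4.
  pose proof (Zsum_tailN _ _ _ H (2 * N)). pose proof (Zsum_tailN _ _ _ He N).
  pose proof (Zsum_tailN _ _ _ Ho N). rewrite Cmod_sym in H1, H2.
  destruct H as [_ [_ Hf]]. pose proof (Hf (2 * Z.of_nat N + 1)%Z).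
  assert (r ^ (Z.abs_nat (2 * Z.of_nat N + 1)) <= r ^ N)%R by (apply pow_le_anti; [lra|lia]).
  assert (r ^ (2 * N) <= r ^ N)%R by (apply pow_le_anti; [lra|lia]).
  assert (0 <= 4 * K / (1 - r))%R. { unfold Rdiv. apply Rmult_le_pos. lra. left. apply Rinv_0_lt_compat. lra. }
  assert (4 * K / (1 - r) * r ^ (2 * N) <= 4 * K / (1 - r) * r ^ N)%R by (apply Rmult_le_compat_l; auto).
  assert (K * r ^ (Z.abs_nat (2 * Z.of_nat N + 1)) <= K * r ^ N)%R by (apply Rmult_le_compat_l; auto).
  rewrite !Rmult_plus_distr_r. lra.
Qed.

Definition GD2b (K r : R) (F : Z -> Z -> C) : Prop :=
  (0 <= K)%R /\ (0 < r < 1)%R /\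
  forall m n, (Cmod (F m n) <= K * r ^ (Z.abs_nat m) * r ^ (Z.abs_nat n))%R.

Lemma SC_plus f g N : SC N (fun m => f m + g m) = SC N f + SC N g.
Proof. induction N. reflexivity. rewrite !SC_S, IHN. ring. Qed.

Lemma SC_minus f g N : SC N (fun m => f m - g m) = SC N f - SC N g.
Proof. induction N. reflexivity. rewrite !SC_S, IHN. ring. Qed.

Lemma SC_Cmod f N : (Cmod (SC N f) <= SR N (fun m => Cmod (f m)))%R.
Proof.
  induction N. simpl. lra. rewrite SC_S, SR_S.
  eapply Rle_trans. apply Cmod_triangle. pose proof (Cmod_triangle (f (Z.of_nat (S N))) (f (- Z.of_nat (S N))%Z)).
  lra.
Qed.

Lemma SR_le f g N : (forall m, f m <= g m)%R -> (SR N f <= SR N g)%R.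
Proof.
  intros H. induction N. apply H. rewrite !SR_S.
  pose proof (H (Z.of_nat (S N))). pose proof (H (- Z.of_nat (S N))%Z). lra.
Qed.

Lemma SR_scal c f N : SR N (fun m => c * f m)%R = (c * SR N f)%R.
Proof. induction N. reflexivity. rewrite !SR_S, IHN. ring. Qed.

Lemma SR_geom r N : (0 <= r < 1)%R -> (SR N (fun m => r ^ Z.abs_nat m) <= 1 + 2 / (1 - r))%R.
Proof.
  intros Hr.
  assert (E : SR N (fun m => r ^ Z.abs_nat m)%R = (1 + 2 * r * (1 - r ^ N) / (1 - r))%R).
  { induction N. simpl. field. lra.
    rewrite SR_S, IHN. replace (Z.abs_nat (Z.of_nat (S N))) with (S N) by lia.
    replace (Z.abs_nat (- Z.of_nat (S N))) with (S N) by lia. simpl pow. field. lra. }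
  rewrite E. assert (0 <= r ^ N)%R by (apply pow_le; lra).
  assert (r ^ N <= 1)%R. { replace 1%R with (r ^ 0)%R by reflexivity. apply pow_le_anti; lra || lia. }
  unfold Rdiv. assert (0 < / (1 - r))%R by (apply Rinv_0_lt_compat; lra).
  assert (0 <= r * (1 - r ^ N) <= 1)%R by nra.
  nra.
Qed.

Lemma SC_swap F N1 N2 : SC N1 (fun m => SC N2 (fun n => F m n)) = SC N2 (fun n => SC N1 (fun m => F m n)).
Proof.
  induction N1. reflexivity.
  rewrite SC_S, IHN1. rewrite <- !SC_plus. reflexivity.
Qed.

Lemma GD2_row K r F m : GD2b K r F -> GDb (K * r ^ Z.abs_nat m) r (F m).
Proof.
  intros [HK [Hr HF]]. split. apply Rmult_le_pos; auto. apply pow_le; lra. split; auto.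
Qed.



Lemma GD2_swap K r F : GD2b K r F -> GD2b K r (fun n m => F m n).
Proof.
  intros [HK [Hr HF]]. split; auto. split; auto. intros m n. eapply Rle_trans. apply HF. lra.
Qed.

Lemma GD2_outer K r F : GD2b K r F -> GDb (K * (1 + 4 / (1 - r))) r (fun m => Zsum (F m)).
Proof.
  intros H. pose proof H as H0; destruct H0 as [HK [Hr HF]]. split.
  apply Rmult_le_pos; auto. assert (0 < / (1 - r))%R by (apply Rinv_0_lt_compat; lra). unfold Rdiv. nra.
  split; auto. intro m. eapply Rle_trans. apply (Zsum_bound _ _ _ (GD2_row K r F m H)). lra.
Qed.

Lemma iter_approx K r F : GD2b K r F -> forall N,
  (Cmod (Zsum (fun m => Zsum (F m)) - SC N (fun m => SC N (F m)))
    <= (4 * (K * (1 + 4 / (1 - r))) / (1 - r) + 4 * K / (1 - r) * (1 + 2 / (1 - r))) * r ^ N)%R.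
Proof.
  intros H N. pose proof (GD2_outer K r F H) as HO.
  destruct (GDb_K _ _ _ HO) as [Hr _]. pose proof H as H0; destruct H0 as [HK [_ HF]].
  replace (Zsum (fun m => Zsum (F m)) - SC N (fun m => SC N (F m))) with
    ((Zsum (fun m => Zsum (F m)) - SC N (fun m => Zsum (F m))) + SC N (fun m => Zsum (F m) - SC N (F m)))
    by (rewrite SC_minus; ring).
  eapply Rle_trans. apply Cmod_triangle. rewrite Rmult_plus_distr_r.
  apply Rplus_le_compat. apply (Zsum_tailN _ _ _ HO).
  eapply Rle_trans. apply SC_Cmod.
  eapply Rle_trans. apply SR_le with (g := (fun m => (4 * K / (1 - r) * r ^ N) * r ^ Z.abs_nat m)%R).
  { intro m. eapply Rle_trans. apply (Zsum_tailN _ _ _ (GD2_row K r F m H)). right. unfold Rdiv. ring. }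
  rewrite SR_scal. pose proof (SR_geom r N ltac:(lra)).
  assert (0 <= 4 * K / (1 - r) * r ^ N)%R.
  { apply Rmult_le_pos. unfold Rdiv. apply Rmult_le_pos. lra. left. apply Rinv_0_lt_compat. lra. apply pow_le. lra. }
  replace (4 * K / (1 - r) * (1 + 2 / (1 - r)) * r ^ N)%R with (4 * K / (1 - r) * r ^ N * (1 + 2 / (1 - r)))%R by ring.
  apply Rmult_le_compat_l; auto.
Qed.

Lemma Zsum_fubini K r F : GD2b K r F ->
  Zsum (fun m => Zsum (fun n => F m n)) = Zsum (fun n => Zsum (fun m => F m n)).
Proof.
  intros H. pose proof (GD2_swap K r F H) as H'. destruct (GDb_K _ _ _ (GD2_outer K r F H)) as [Hr _].
  set (c := (4 * (K * (1 + 4 / (1 - r))) / (1 - r) + 4 * K / (1 - r) * (1 + 2 / (1 - r)))%R).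
  apply (eq_geom _ _ (c + c) r ltac:(lra)). intro N.
  pose proof (iter_approx K r F H N) as A1. pose proof (iter_approx K r _ H' N) as A2.
  fold c in A1, A2. cbv beta in A2.
  eapply Rle_trans. apply (Cmod_tri3 _ (SC N (fun m => SC N (fun n => F m n))) (SC N (fun n => SC N (fun m => F m n)))).
  replace (SC N (fun m => SC N (fun n => F m n)) - SC N (fun n => SC N (fun m => F m n))) with (RtoC 0)
    by (rewrite (SC_swap F N N); ring).
  rewrite Cmod_0. rewrite Cmod_sym in A2.
  assert (A1' : (Cmod (Zsum (fun m => Zsum (fun n => F m n)) - SC N (fun m => SC N (fun n => F m n))) <= c * r ^ N)%R) by exact A1.
  rewrite Rmult_plus_distr_r. lra.
Qed.

Lemma Cexp_add u v : Cexp (u + v) = Cexp u * Cexp v.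
Proof.
  destruct u as [a b], v as [c d]. unfold Cexp, Cmult, Cplus, Re, Im; simpl.
  rewrite exp_plus, cos_plus, sin_plus. f_equal; ring.
Qed.

Lemma Cmod_Cexp u : Cmod (Cexp u) = exp (Re u).
Proof.
  destruct u as [a b]. unfold Cexp, Cmod, Re, Im; simpl.
  replace ((exp a * cos b) * ((exp a * cos b) * 1) + (exp a * sin b) * ((exp a * sin b) * 1))%R
    with (exp a ^ 2)%R.
  apply sqrt_pow2. left; apply exp_pos.
  pose proof (sin2_cos2 b). unfold Rsqr in H. simpl. nra.
Qed.

Lemma Cexp_neq0 u : Cexp u <> 0.
Proof.
  intro H. pose proof (Cmod_Cexp u). rewrite H, Cmod_0 in H0. pose proof (exp_pos (Re u)). lra.
Qed.

Lemma Cexp_0 : Cexp 0 = 1.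
Proof. unfold Cexp; simpl. rewrite exp_0, cos_0, sin_0. apply injective_projections; simpl; ring. Qed.

Lemma qpow_add z r s : qpow z r * qpow z s = qpow z (r + s).
Proof. unfold qpow. rewrite <- Cexp_add. f_equal. rewrite RtoC_plus. ring. Qed.

Lemma qpow_dbl z r : qpow (RtoC 2 * z) r = qpow z (2 * r).
Proof. unfold qpow. f_equal. rewrite RtoC_mult. ring. Qed.

Lemma Cmod_qpow z r : Cmod (qpow z r) = exp (- (PI * Im z * r)).
Proof. unfold qpow. rewrite Cmod_Cexp. f_equal. destruct z; unfold Re, Im; simpl. ring. Qed.

Lemma qpow_0 z : qpow z 0 = 1.
Proof. unfold qpow. replace (RtoC PI * Ci * z * RtoC 0) with (RtoC 0) by ring. apply Cexp_0. Qed.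

Lemma exp_pow x n : (exp x ^ n = exp (x * INR n))%R.
Proof.
  induction n. simpl. rewrite Rmult_0_r, exp_0. reflexivity.
  rewrite S_INR. simpl. rewrite IHn, <- exp_plus. f_equal. ring.
Qed.

Lemma exp_mono x y : (x <= y)%R -> (exp x <= exp y)%R.
Proof. intros [H|H]. left; apply exp_increasing; auto. subst; lra. Qed.

Lemma qpow_le z e a c n : (0 < Im z)%R -> (e >= a * INR n - c)%R ->
  (Cmod (qpow z e) <= exp (PI * Im z * c) * exp (- (PI * Im z * a)) ^ n)%R.
Proof.
  intros Hy He. rewrite Cmod_qpow, exp_pow, <- exp_plus.
  apply exp_mono. pose proof PI_RGT_0. assert (0 < PI * Im z)%R by (apply Rmult_lt_0_compat; lra).
  assert (PI * Im z * (e - (a * INR n - c)) >= 0)%R by (apply Rle_ge, Rmult_le_pos; lra).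
  nra.
Qed.

Lemma INR_abs m : INR (Z.abs_nat m) = IZR (Z.abs m).
Proof. rewrite INR_IZR_INZ, Zabs2Nat.id_abs. reflexivity. Qed.

Definition ta (z : C) (m : Z) : C := qpow z (IZR m ^ 2)%R.
Definition tb (z : C) (m : Z) : C := qpow z ((IZR m + /2) ^ 2)%R.
Definition sg (m : Z) : C := RtoC ((-1) ^ Z.to_nat (m * m))%R.

Lemma theta3_eq z : theta3 z = Zsum (ta z). Proof. reflexivity. Qed.
Lemma theta2_eq z : theta2 z = Zsum (tb z). Proof. reflexivity. Qed.
Lemma theta4_eq z : theta4 z = Zsum (fun m => sg m * ta z m). Proof. reflexivity. Qed.

Definition rho_of (z : C) : R := exp (- (PI * Im z * 1)).

Lemma rho_of_bounds z : (0 < Im z)%R -> (0 < rho_of z < 1)%R.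
Proof.
  intros Hy. unfold rho_of. split. apply exp_pos.
  pose proof PI_RGT_0. assert (- (PI * Im z * 1) < 0)%R by nra.
  apply exp_increasing in H0. rewrite exp_0 in H0. exact H0.
Qed.

Lemma GD_ta z : (0 < Im z)%R -> GDb 1 (rho_of z) (ta z).
Proof.
  intros Hy. split. lra. split. apply rho_of_bounds; auto.
  intro m. unfold ta. eapply Rle_trans. apply (qpow_le z _ 1 0 (Z.abs_nat m) Hy).
  - rewrite INR_abs. assert (Hz: (Z.abs m <= m*m)%Z) by nia. apply IZR_le in Hz.
    rewrite mult_IZR in Hz. simpl. lra.
  - rewrite Rmult_0_r, exp_0. unfold rho_of. lra.
Qed.

Lemma GD_tb z : (0 < Im z)%R -> GDb (exp (PI * Im z * 1)) (rho_of z) (tb z).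
Proof.
  intros Hy. split. left; apply exp_pos. split. apply rho_of_bounds; auto.
  intro m. unfold tb. eapply Rle_trans. apply (qpow_le z _ 1 1 (Z.abs_nat m) Hy).
  - rewrite INR_abs. assert (Hz: (Z.abs m - 1 <= m*m + m)%Z) by nia. apply IZR_le in Hz.
    rewrite minus_IZR, plus_IZR, mult_IZR in Hz. simpl. lra.
  - unfold rho_of. lra.
Qed.

Lemma pow_m1 k : ((-1) ^ k = if Nat.even k then 1 else -1)%R.
Proof.
  induction k. reflexivity. change ((-1) ^ (S k))%R with (-1 * (-1) ^ k)%R. rewrite IHk, Nat.even_succ. unfold Nat.odd.
  destruct (Nat.even k); simpl; ring.
Qed.

Lemma Zeven_nat k : Z.even (Z.of_nat k) = Nat.even k.
Proof.
  destruct (Nat.Even_or_Odd k) as [[q Hq]|[q Hq]]; subst.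
  - replace (Z.of_nat (2 * q)) with (2 * Z.of_nat q)%Z by lia. rewrite Z.even_even, Nat.even_even. auto.
  - replace (Z.of_nat (2 * q + 1)) with (2 * Z.of_nat q + 1)%Z by lia. rewrite Z.even_odd, Nat.even_odd. auto.
Qed.

Lemma sg_eq m : sg m = if Z.even m then 1 else - (1).
Proof.
  unfold sg. rewrite pow_m1, <- Zeven_nat, Z2Nat.id by nia. rewrite Z.even_mul, Bool.orb_diag.
  destruct (Z.even m); unfold RtoC; simpl. reflexivity. unfold Copp; simpl. f_equal; ring.
Qed.

Lemma Cmod_sg m : Cmod (sg m) = 1%R.
Proof.
  rewrite sg_eq. destruct (Z.even m). apply Cmod_1. rewrite Cmod_opp. apply Cmod_1.
Qed.

Lemma GD_sta z : (0 < Im z)%R -> GDb 1 (rho_of z) (fun m => sg m * ta z m).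
Proof.
  intros Hy. pose proof (GD_ta z Hy) as [H1 [H2 H3]]. split; auto. split; auto.
  intro m. rewrite Cmod_mult, Cmod_sg, Rmult_1_l. auto.
Qed.

Lemma sg_even j m : sg m * sg (2 * j + m) = 1.
Proof.
  rewrite !sg_eq. rewrite Z.add_comm, Z.even_add_mul_2. destruct (Z.even m); ring.
Qed.

Lemma sg_odd j m : sg m * sg (2 * j + 1 + m) = - (1).
Proof.
  rewrite !sg_eq. replace (2 * j + 1 + m)%Z with ((m + 1) + 2 * j)%Z by ring.
  rewrite Z.even_add_mul_2, Z.even_add. destruct (Z.even m); simpl; ring.
Qed.

Lemma GD2_of_GD Kf Kg r f g : GDb Kf r f -> GDb Kg r g ->
  GD2b (Kf * Kg) (sqrt r) (fun m k => f m * g (k + m)%Z).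
Proof.
  intros [Hf1 [Hr Hf]] [Hg1 [_ Hg]].
  assert (Hs : (0 < sqrt r < 1)%R).
  { split. apply sqrt_lt_R0; lra. rewrite <- sqrt_1. apply sqrt_lt_1_alt. lra. }
  split. apply Rmult_le_pos; auto. split; auto.
  intros m k. rewrite Cmod_mult.
  eapply Rle_trans. apply Rmult_le_compat. apply Cmod_ge_0. apply Cmod_ge_0. apply Hf. apply Hg.
  replace (Kf * r ^ Z.abs_nat m * (Kg * r ^ Z.abs_nat (k + m)))%R
    with (Kf * Kg * (sqrt r ^ (2 * (Z.abs_nat m + Z.abs_nat (k + m)))))%R.
  2:{ rewrite pow_mult, pow2_sqrt by lra. rewrite pow_add. ring. }
  rewrite (Rmult_assoc (Kf * Kg)). apply Rmult_le_compat_l. apply Rmult_le_pos; auto.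
  rewrite <- pow_add. apply pow_le_anti. lra. lia.
Qed.

Lemma Zsum_prod_split f g Kf Kg r : GDb Kf r f -> GDb Kg r g ->
  Zsum f * Zsum g = Zsum (fun j => Zsum (fun m => f m * g (2 * j + m)%Z))
                  + Zsum (fun j => Zsum (fun m => f m * g (2 * j + 1 + m)%Z)).
Proof.
  intros Hf Hg.
  pose proof (GD2_of_GD Kf Kg r f g Hf Hg) as H2.
  rewrite <- (Zsum_scal_r (Zsum g) f Kf r Hf).
  transitivity (Zsum (fun m => Zsum (fun k => f m * g (k + m)%Z))).
  { apply Zsum_ext. intro m. rewrite <- (Zsum_scal_l (f m) g Kg r Hg).
    symmetry. apply (Zsum_shift (fun n => f m * g n) _ _ (GDb_scal (f m) Kg r g Hg)). }
  rewrite (Zsum_fubini _ _ _ H2).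
  pose proof (GD2_outer _ _ _ (GD2_swap _ _ _ H2)) as HO.
  rewrite (Zsum_split _ _ _ HO). reflexivity.
Qed.

Lemma RtoC_plus_2 : RtoC 2 = 1 + 1.
Proof. unfold RtoC. apply injective_projections; simpl; ring. Qed.

Ltac qid := unfold ta, tb; rewrite ?qpow_add, ?qpow_dbl; f_equal;
  rewrite ?plus_IZR, ?mult_IZR; field.

Lemma Im_dbl z : Im (RtoC 2 * z) = (2 * Im z)%R.
Proof. destruct z; unfold Im; simpl. ring. Qed.

Section Dup.
Variable z : C.
Hypothesis Hz : (0 < Im z)%R.
Let w := RtoC 2 * z.
Lemma Hw : (0 < Im w)%R. Proof. unfold w. rewrite Im_dbl. lra. Qed.

Lemma I1 : theta3 z * theta3 z = theta3 w * theta3 w + theta2 w * theta2 w.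
Proof.
  rewrite !theta3_eq, theta2_eq.
  rewrite (Zsum_prod_split _ _ _ _ _ (GD_ta z Hz) (GD_ta z Hz)). f_equal.
  - transitivity (Zsum (fun j => Zsum (ta w) * ta w j)).
    + apply Zsum_ext. intro j.
      transitivity (Zsum (fun m => ta w (m + j)%Z * ta w j)).
      { apply Zsum_ext. intro m. unfold w. qid. }
      rewrite (Zsum_scal_r _ _ _ _ (GDb_shift _ _ _ j (GD_ta w Hw))).
      rewrite (Zsum_shift _ _ _ (GD_ta w Hw)). reflexivity.
    + rewrite <- (Zsum_scal_l _ _ _ _ (GD_ta w Hw)). apply Zsum_ext. intro; ring.
  - transitivity (Zsum (fun j => Zsum (tb w) * tb w j)).
    + apply Zsum_ext. intro j.
      transitivity (Zsum (fun m => tb w (m + j)%Z * tb w j)).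
      { apply Zsum_ext. intro m. unfold w. qid. }
      rewrite (Zsum_scal_r _ _ _ _ (GDb_shift _ _ _ j (GD_tb w Hw))).
      rewrite (Zsum_shift _ _ _ (GD_tb w Hw)). reflexivity.
    + rewrite <- (Zsum_scal_l _ _ _ _ (GD_tb w Hw)). apply Zsum_ext. intro; ring.
Qed.

Lemma I2 : theta4 z * theta4 z = theta3 w * theta3 w - theta2 w * theta2 w.
Proof.
  rewrite !theta4_eq, theta3_eq, theta2_eq.
  rewrite (Zsum_prod_split _ _ _ _ _ (GD_sta z Hz) (GD_sta z Hz)).
  replace (Zsum (ta w) * Zsum (ta w) - Zsum (tb w) * Zsum (tb w))
    with (Zsum (ta w) * Zsum (ta w) + (- Zsum (tb w)) * Zsum (tb w)) by ring.
  f_equal.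
  - transitivity (Zsum (fun j => Zsum (ta w) * ta w j)).
    + apply Zsum_ext. intro j.
      transitivity (Zsum (fun m => ta w (m + j)%Z * ta w j)).
      { apply Zsum_ext. intro m.
        replace (sg m * ta z m * (sg (2 * j + m) * ta z (2 * j + m)))
          with ((sg m * sg (2 * j + m)%Z) * (ta z m * ta z (2 * j + m))) by ring.
        rewrite sg_even, Cmult_1_l. unfold w. qid. }
      rewrite (Zsum_scal_r _ _ _ _ (GDb_shift _ _ _ j (GD_ta w Hw))).
      rewrite (Zsum_shift _ _ _ (GD_ta w Hw)). reflexivity.
    + rewrite <- (Zsum_scal_l _ _ _ _ (GD_ta w Hw)). apply Zsum_ext. intro; ring.
  - transitivity (Zsum (fun j => (- Zsum (tb w)) * tb w j)).
    + apply Zsum_ext. intro j.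
      transitivity (Zsum (fun m => tb w (m + j)%Z * (- tb w j))).
      { apply Zsum_ext. intro m.
        replace (sg m * ta z m * (sg (2 * j + 1 + m) * ta z (2 * j + 1 + m)))
          with ((sg m * sg (2 * j + 1 + m)%Z) * (ta z m * ta z (2 * j + 1 + m))) by ring.
        rewrite sg_odd.
        replace (tb w (m + j)%Z * - tb w j) with (- (tb w (m + j)%Z * tb w j)) by ring.
        replace (- (1) * (ta z m * ta z (2 * j + 1 + m)%Z)) with (- (ta z m * ta z (2 * j + 1 + m)%Z)) by ring.
        f_equal. unfold w. qid. }
      rewrite (Zsum_scal_r _ _ _ _ (GDb_shift _ _ _ j (GD_tb w Hw))).
      rewrite (Zsum_shift _ _ _ (GD_tb w Hw)). ring.
    + rewrite (Zsum_scal_l _ _ _ _ (GD_tb w Hw)). reflexivity.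
Qed.

Lemma I3 : theta2 z * theta2 z = RtoC 2 * (theta2 w * theta3 w).
Proof.
  rewrite !theta2_eq, theta3_eq.
  rewrite (Zsum_prod_split _ _ _ _ _ (GD_tb z Hz) (GD_tb z Hz)).
  replace (RtoC 2 * (Zsum (tb w) * Zsum (ta w))) with (Zsum (tb w) * Zsum (ta w) + Zsum (ta w) * Zsum (tb w))
    by (rewrite RtoC_plus_2; ring).
  f_equal.
  - transitivity (Zsum (fun j => Zsum (tb w) * ta w j)).
    + apply Zsum_ext. intro j.
      transitivity (Zsum (fun m => tb w (m + j)%Z * ta w j)).
      { apply Zsum_ext. intro m. unfold w. qid. }
      rewrite (Zsum_scal_r _ _ _ _ (GDb_shift _ _ _ j (GD_tb w Hw))).
      rewrite (Zsum_shift _ _ _ (GD_tb w Hw)). reflexivity.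
    + rewrite <- (Zsum_scal_l _ _ _ _ (GD_ta w Hw)). reflexivity.
  - transitivity (Zsum (fun j => Zsum (ta w) * tb w j)).
    + apply Zsum_ext. intro j.
      transitivity (Zsum (fun m => ta w (m + (j + 1))%Z * tb w j)).
      { apply Zsum_ext. intro m. unfold w. qid. }
      rewrite (Zsum_scal_r _ _ _ _ (GDb_shift _ _ _ (j + 1) (GD_ta w Hw))).
      rewrite (Zsum_shift _ _ _ (GD_ta w Hw)). reflexivity.
    + rewrite <- (Zsum_scal_l _ _ _ _ (GD_tb w Hw)). reflexivity.
Qed.

End Dup.

Lemma pow4 (x : C) : Cpow x 4 = (x * x) * (x * x).
Proof. simpl. ring. Qed.

Lemma jacobi z : (0 < Im z)%R ->
  Cpow (theta3 z) 4 = Cpow (theta2 z) 4 + Cpow (theta4 z) 4.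
Proof.
  intros Hz. rewrite !pow4, (I1 z Hz), (I2 z Hz), (I3 z Hz).
  rewrite RtoC_plus_2. ring.
Qed.

Lemma mult_eq0 (x y : C) : x * y = 0 -> x = 0 \/ y = 0.
Proof.
  intros H. destruct (Ceq_dec x 0) as [->|Hx]. auto. right.
  replace y with (/ x * (x * y)) by (field; auto). rewrite H. ring.
Qed.

Definition Pnz (w : C) : Prop := theta2 w <> 0 /\ theta3 w <> 0 /\ theta4 w <> 0.

Lemma Pnz_step z : (0 < Im z)%R -> Pnz (RtoC 2 * z) -> Pnz z.
Proof.
  intros Hz [H2 [H3 H4]].
  pose proof (Hw z Hz) as Hw'.
  assert (E : (theta3 z * theta4 z) * (theta3 z * theta4 z) = Cpow (theta4 (RtoC 2 * z)) 4).
  { replace ((theta3 z * theta4 z) * (theta3 z * theta4 z)) with ((theta3 z * theta3 z) * (theta4 z * theta4 z)) by ring.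
    rewrite (I1 z Hz), (I2 z Hz).
    assert (J := jacobi _ Hw'). rewrite !pow4 in J.
    rewrite pow4. 
    replace ((theta3 (RtoC 2 * z) * theta3 (RtoC 2 * z) + theta2 (RtoC 2 * z) * theta2 (RtoC 2 * z)) *
      (theta3 (RtoC 2 * z) * theta3 (RtoC 2 * z) - theta2 (RtoC 2 * z) * theta2 (RtoC 2 * z)))
     with (theta3 (RtoC 2 * z) * theta3 (RtoC 2 * z) * (theta3 (RtoC 2 * z) * theta3 (RtoC 2 * z))
       - theta2 (RtoC 2 * z) * theta2 (RtoC 2 * z) * (theta2 (RtoC 2 * z) * theta2 (RtoC 2 * z))) by ring.
    rewrite J. ring. }
  assert (N4 : Cpow (theta4 (RtoC 2 * z)) 4 <> 0).
  { rewrite pow4. repeat apply Cmult_neq_0; auto. }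
  assert (N2 : theta2 z * theta2 z <> 0).
  { rewrite (I3 z Hz). apply Cmult_neq_0. intro H. apply (f_equal Re) in H. simpl in H. lra.
    apply Cmult_neq_0; auto. }
  split; [|split].
  - intro H. apply N2. rewrite H. ring.
  - intro H. apply N4. rewrite <- E. rewrite H. ring.
  - intro H. apply N4. rewrite <- E. rewrite H. ring.
Qed.

Lemma Cmod_ge_sub (a b : C) : (Cmod a - Cmod b <= Cmod (a + b))%R.
Proof.
  pose proof (Cmod_triangle (a + b) (- b)). rewrite Cmod_opp in H.
  replace (a + b + - b) with a in H by ring. lra.
Qed.

Lemma Pnz_big w : (0 < Im w)%R -> (rho_of w <= / 10)%R -> Pnz w.
Proof.
  intros Hw Hr. pose proof (rho_of_bounds w Hw) as Hrb.
  assert (T0 : forall f, GDb 1 (rho_of w) f -> f 0%Z = 1 -> Zsum f <> 0).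
  { intros f Hf H0 HZ. pose proof (Zsum_tail f 1 (rho_of w) Hf 0) as T.
    rewrite HZ in T. simpl in T. rewrite H0 in T.
    replace (0 - 1) with (- (1)) in T by ring. rewrite Cmod_opp, Cmod_1 in T.
    assert (rho_of w / (1 - rho_of w) <= / 9)%R.
    { apply Rmult_le_reg_r with (1 - rho_of w)%R. lra. unfold Rdiv. rewrite Rmult_assoc, Rinv_l by lra. lra. }
    unfold Rdiv in *. lra. }
  assert (ta0 : ta w 0 = 1).
  { unfold ta. replace (IZR 0 ^ 2)%R with 0%R by (simpl; ring). apply qpow_0. }
  split; [|split].
  -
    set (te := fun m : Z => qpow w (IZR m * IZR m + IZR m)%R).
    assert (E : theta2 w = qpow w (/4) * Zsum te).
    { rewrite theta2_eq.
      assert (GDte : GDb (exp (PI * Im w * 1)) (rho_of w) te).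
      { split. left; apply exp_pos. split. auto.
        intro m. unfold te. eapply Rle_trans. apply (qpow_le w _ 1 1 (Z.abs_nat m) Hw).
        - rewrite INR_abs. assert (Hz: (Z.abs m - 1 <= m*m + m)%Z) by nia. apply IZR_le in Hz.
          rewrite minus_IZR, plus_IZR, mult_IZR in Hz. lra.
        - unfold rho_of. lra. }
      rewrite <- (Zsum_scal_l _ _ _ _ GDte). apply Zsum_ext. intro m. unfold tb, te.
      rewrite qpow_add. f_equal. field. }
    rewrite E. apply Cmult_neq_0. apply Cexp_neq0.
    assert (GDte : GDb (exp (PI * Im w * 1)) (rho_of w) te).
    { split. left; apply exp_pos. split. auto.
      intro m. unfold te. eapply Rle_trans. apply (qpow_le w _ 1 1 (Z.abs_nat m) Hw).
      - rewrite INR_abs. assert (Hz: (Z.abs m - 1 <= m*m + m)%Z) by nia. apply IZR_le in Hz.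
        rewrite minus_IZR, plus_IZR, mult_IZR in Hz. lra.
      - unfold rho_of. lra. }
    intro HZ. pose proof (Zsum_tail te _ _ GDte 1) as T. rewrite HZ in T.
    assert (S1 : SC 1 te = RtoC 2 + te 1%Z).
    { simpl SC. unfold te. simpl IZR.
      replace (0 * 0 + 0)%R with 0%R by ring. replace (-1 * -1 + -1)%R with 0%R by ring.
      rewrite qpow_0, RtoC_plus_2. ring. }
    rewrite S1 in T. rewrite Cmod_sym in T. replace (RtoC 2 + te 1%Z - 0) with (RtoC 2 + te 1%Z) in T by ring.
    pose proof (Cmod_ge_sub (RtoC 2) (te 1%Z)). rewrite Cmod_R, Rabs_pos_eq in H by lra.
    assert (Ht1 : (Cmod (te 1%Z) <= rho_of w)%R).
    { unfold te. rewrite Cmod_qpow. unfold rho_of. apply exp_mono. simpl IZR. pose proof PI_RGT_0. nra. }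
    assert (Kr : (exp (PI * Im w * 1) * rho_of w = 1)%R).
    { unfold rho_of. rewrite <- exp_plus. replace (PI * Im w * 1 + - (PI * Im w * 1))%R with 0%R by ring. apply exp_0. }
    assert (B : (4 * exp (PI * Im w * 1) * rho_of w ^ 2 / (1 - rho_of w) <= 4 / 9)%R).
    { replace (4 * exp (PI * Im w * 1) * rho_of w ^ 2)%R with (4 * rho_of w * (exp (PI * Im w * 1) * rho_of w))%R by ring.
      rewrite Kr, Rmult_1_r.
      apply Rmult_le_reg_r with (1 - rho_of w)%R. lra. unfold Rdiv. rewrite Rmult_assoc, Rinv_l by lra. lra. }
    lra.
  - intro HZ. rewrite theta3_eq in HZ. exact (T0 _ (GD_ta w Hw) ta0 HZ).
  - intro HZ. rewrite theta4_eq in HZ. refine (T0 _ (GD_sta w Hw) _ HZ).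
    rewrite ta0, sg_eq. simpl. ring.
Qed.

Fixpoint dbl (j : nat) (w : C) : C := match j with O => w | S j => dbl j (RtoC 2 * w) end.

Lemma Im_dblj j w : Im (dbl j w) = (2 ^ j * Im w)%R.
Proof. revert w. induction j; intro w. simpl. ring. simpl dbl. rewrite IHj, Im_dbl. simpl. ring. Qed.

Lemma Pnz_dbl j w : (0 < Im w)%R -> Pnz (dbl j w) -> Pnz w.
Proof.
  revert w. induction j; intros w Hw H. exact H.
  apply Pnz_step; auto. apply IHj. rewrite Im_dbl. lra. exact H.
Qed.

Lemma INR_le_pow2 j : (INR j <= 2 ^ j)%R.
Proof. induction j. simpl. lra. rewrite S_INR. simpl. pose proof (pow_R1_Rle 2 j ltac:(lra)). lra. Qed.

Lemma Pnz_all z : (0 < Im z)%R -> Pnz z.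
Proof.
  intros Hz. pose proof PI_RGT_0.
  destruct (archimed (9 / (PI * Im z))) as [Ha _].
  set (j := Z.to_nat (up (9 / (PI * Im z)))).
  assert (Hj : (9 / (PI * Im z) < INR j)%R).
  { unfold j. rewrite INR_IZR_INZ. assert (0 < 9 / (PI * Im z))%R.
    { apply Rdiv_lt_0_compat. lra. apply Rmult_lt_0_compat; lra. }
    assert (0 <= up (9 / (PI * Im z)))%Z. { apply le_IZR. lra. }
    rewrite Z2Nat.id by lia. lra. }
  apply (Pnz_dbl j z Hz). apply Pnz_big.
  rewrite Im_dblj. apply Rmult_lt_0_compat; auto. apply pow_lt; lra.
  unfold rho_of. rewrite Im_dblj.
  set (t := (PI * (2 ^ j * Im z) * 1)%R).
  assert (Ht : (9 <= t)%R).
  { unfold t. pose proof (INR_le_pow2 j).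
    apply Rmult_lt_compat_r with (r := (PI * Im z)%R) in Hj. 2:{ apply Rmult_lt_0_compat; lra. }
    unfold Rdiv in Hj. rewrite Rmult_assoc, Rinv_l, Rmult_1_r in Hj. 2:{ apply Rgt_not_eq, Rmult_lt_0_compat; lra. }
    assert (INR j * (PI * Im z) <= 2 ^ j * (PI * Im z))%R. { apply Rmult_le_compat_r; auto. left; apply Rmult_lt_0_compat; lra. }
    nra. }
  pose proof (exp_ineq1 t ltac:(lra)).
  rewrite exp_Ropp. apply Rinv_le_contravar. lra. lra.
Qed.

Definition bc (n k : nat) : R := if (k <=? n)%nat then Binomial.C n k else 0%R.

Lemma bc_zero n k : (n < k)%nat -> bc n k = 0%R.
Proof. intros H. unfold bc. destruct (Nat.leb_spec k n). lia. reflexivity. Qed.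

Lemma bc_0 n : bc n 0 = 1%R.
Proof. unfold bc. simpl. apply C_n_0. Qed.

Lemma bc_pascal n k : bc (S n) (S k) = (bc n k + bc n (S k))%R.
Proof.
  unfold bc. destruct (Nat.leb_spec (S k) (S n)), (Nat.leb_spec k n), (Nat.leb_spec (S k) n); try lia.
  - symmetry. apply pascal. lia.
  - assert (k = n) by lia. subst. rewrite !C_n_n. ring.
  - ring.
Qed.

Lemma bc_absorb m k : (k < m)%nat -> bc m (S k) = (INR (m - k) / INR (S k) * bc m k)%R.
Proof.
  intros H. unfold bc. destruct (Nat.leb_spec (S k) m), (Nat.leb_spec k m); try lia.
  apply pascal_step3. lia.
Qed.

Fixpoint csum (f : nat -> C) (L : nat) : C :=
  match L with O => 0 | S L' => csum f L' + f L' end.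

Lemma csum_ext f g L : (forall i, (i < L)%nat -> f i = g i) -> csum f L = csum g L.
Proof.
  induction L; intros H. reflexivity. simpl. rewrite IHL by (intros; apply H; lia). rewrite H by lia. reflexivity.
Qed.

Lemma csum_plus f g L : csum (fun i => f i + g i) L = csum f L + csum g L.
Proof. induction L. simpl. ring. simpl. rewrite IHL. ring. Qed.

Lemma csum_scal c f L : csum (fun i => c * f i) L = c * csum f L.
Proof. induction L. simpl. ring. simpl. rewrite IHL. ring. Qed.

Lemma csum_shift f L : csum f (S L) = f O + csum (fun i => f (S i)) L.
Proof. induction L. simpl. ring. change (csum f (S (S L))) with (csum f (S L) + f (S L)). rewrite IHL. simpl. ring. Qed.

Lemma csum_extend (f : nat -> C) L1 L2 : (L1 <= L2)%nat -> (forall i, (L1 <= i < L2)%nat -> f i = RtoC 0) -> csum f L2 = csum f L1.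
Proof.
  intros H. induction H; intros Hz. reflexivity. simpl. rewrite IHle by (intros; apply Hz; lia).
  rewrite Hz by lia. ring.
Qed.

Lemma sum_n_csum f N : sum_n f N = csum f (S N).
Proof.
  induction N. rewrite sum_O. simpl. symmetry. apply Cplus_0_l.
  rewrite sum_Sn, IHN. reflexivity.
Qed.

Section Alg.
Variables E X : C.

Definition termA n i := RtoC (bc (n - i) (2 * i)) * Cpow X i * Cpow E (n - 3 * i).
Definition termD n i := RtoC (bc (n - i) (2 * i + 1)) * Cpow X i * Cpow E (n - 3 * i - 1).
Definition Asum n := csum (termA n) (S n).
Definition Dsum n := csum (termD n) (S n).

Lemma RtoC_0 : RtoC 0 = 0. Proof. reflexivity. Qed.
Lemma RtoC_2 : RtoC 2 = 1 + 1. Proof. unfold RtoC. apply injective_projections; simpl; ring. Qed.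
Lemma RtoC_3 : RtoC 3 = 1 + 1 + 1. Proof. unfold RtoC. apply injective_projections; simpl; ring. Qed.
Lemma RtoC_5 : RtoC 5 = 1 + 1 + 1 + 1 + 1. Proof. unfold RtoC. apply injective_projections; simpl; ring. Qed.
Lemma RtoC_7 : RtoC 7 = 1 + 1 + 1 + 1 + 1 + 1 + 1. Proof. unfold RtoC. apply injective_projections; simpl; ring. Qed.

Lemma PD n i : (i <= n)%nat -> termD (S n) i = E * termD n i + termA n i.
Proof.
  intros Hi. unfold termD, termA.
  replace (S n - i)%nat with (S (n - i)) by lia. replace (2 * i + 1)%nat with (S (2 * i)) by lia.
  rewrite bc_pascal, RtoC_plus.
  assert (HS : (S n - 3 * i - 1)%nat = (n - 3 * i)%nat) by lia. rewrite HS.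
  destruct (le_lt_dec (3 * i + 1) n) as [h|h].
  - assert (HE : Cpow E (n - 3 * i) = E * Cpow E (n - 3 * i - 1)).
    { rewrite <- Cpow_S. f_equal. lia. }
    rewrite HE. ring.
  - destruct (Nat.eq_dec (3 * i) n) as [e|e].
    + rewrite (bc_zero (n - i) (S (2 * i))) by lia. ring.
    + rewrite (bc_zero (n - i) (S (2 * i))) by lia. rewrite (bc_zero (n - i) (2 * i)) by lia.
      ring.
Qed.

Lemma PA n i : (i <= n)%nat -> termA (S (S n)) (S i) = E * termA (S n) (S i) + X * termD n i.
Proof.
  intros Hi. unfold termD, termA.
  replace (S (S n) - S i)%nat with (S (n - i)) by lia. replace (S n - S i)%nat with (n - i)%nat by lia.
  replace (2 * S i)%nat with (S (2 * i + 1)) by lia.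
  rewrite bc_pascal, RtoC_plus. rewrite !Cpow_S.
  assert (H1 : (S (S n) - 3 * S i)%nat = (n - 3 * i - 1)%nat) by lia. rewrite H1.
  destruct (le_lt_dec (3 * i + 2) n) as [h|h].
  - assert (HE : Cpow E (n - 3 * i - 1) = E * Cpow E (S n - 3 * S i)).
    { rewrite <- Cpow_S. f_equal. lia. }
    rewrite HE. ring.
  - destruct (Nat.eq_dec (3 * i + 1) n) as [e|e].
    + rewrite (bc_zero (n - i) (S (2 * i + 1))) by lia. ring.
    + rewrite (bc_zero (n - i) (S (2 * i + 1))) by lia. rewrite (bc_zero (n - i) (2 * i + 1)) by lia.
      ring.
Qed.

Lemma R2 n : Dsum (S n) = E * Dsum n + Asum n.
Proof.
  unfold Dsum, Asum. change (csum (termD (S n)) (S (S n))) with (csum (termD (S n)) (S n) + termD (S n) (S n)).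
  assert (Z0 : termD (S n) (S n) = 0).
  { unfold termD. rewrite bc_zero by lia. ring. }
  rewrite Z0, <- csum_scal, <- csum_plus. rewrite Cplus_0_r. apply csum_ext. intros i Hi. apply PD. lia.
Qed.

Lemma R1 n : Asum (S (S n)) = E * Asum (S n) + X * Dsum n.
Proof.
  unfold Dsum, Asum. rewrite (csum_shift (termA (S (S n)))), (csum_shift (termA (S n))).
  change (csum (fun i => termA (S (S n)) (S i)) (S (S n)))
    with (csum (fun i => termA (S (S n)) (S i)) (S n) + termA (S (S n)) (S (S n))).
  assert (Z0 : termA (S (S n)) (S (S n)) = 0).
  { unfold termA. rewrite bc_zero by lia. ring. }
  assert (Z1 : termA (S (S n)) 0 = E * termA (S n) 0).
  { unfold termA. rewrite !bc_0. replace (S (S n) - 3 * 0)%nat with (S (S n - 3 * 0)) by lia. rewrite Cpow_S. ring. }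
  rewrite Z0, Z1, Cplus_0_r.
  rewrite <- !csum_scal.
  replace (E * (termA (S n) 0 + csum (fun i => termA (S n) (S i)) (S n))) with
    (E * termA (S n) 0 + csum (fun i => E * termA (S n) (S i)) (S n)) by (rewrite csum_scal; ring).
  rewrite <- Cplus_assoc, <- csum_plus. f_equal. apply csum_ext. intros i Hi. apply PA. lia.
Qed.

Lemma A0 : Asum 0 = 1.
Proof. unfold Asum, termA. simpl. rewrite bc_0. ring. Qed.
Lemma D0 : Dsum 0 = 0.
Proof. unfold Dsum, termD. simpl. rewrite bc_zero by lia. ring. Qed.
Lemma A1 : Asum 1 = E.
Proof. unfold Asum, termA. simpl. rewrite bc_0, (bc_zero 0 2) by lia. ring. Qed.
Lemma D1 : Dsum 1 = 1.
Proof.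
  unfold Dsum, termD. simpl. rewrite (bc_zero 0 3) by lia. unfold bc. simpl. rewrite C_n_n. ring.
Qed.

Definition Tn n := RtoC 3 * Asum n + RtoC 2 * E * Dsum n.

Lemma A_rec n : Asum (S (S (S n))) = RtoC 2 * E * Asum (S (S n)) - E * E * Asum (S n) + X * Asum n.
Proof.
  rewrite (R1 (S n)), (R2 n). pose proof (R1 n) as H.
  replace (E * Asum (S (S n)) + X * (E * Dsum n + Asum n)) with (E * Asum (S (S n)) + E * (X * Dsum n) + X * Asum n) by ring.
  replace (X * Dsum n) with (Asum (S (S n)) - E * Asum (S n)) by (rewrite H; ring).
  rewrite RtoC_2. ring.
Qed.

Lemma D_rec n : Dsum (S (S (S n))) = RtoC 2 * E * Dsum (S (S n)) - E * E * Dsum (S n) + X * Dsum n.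
Proof.
  rewrite (R2 (S (S n))), (R1 n). pose proof (R2 (S n)) as H.
  replace (Asum (S n)) with (Dsum (S (S n)) - E * Dsum (S n)) by (rewrite H; ring).
  rewrite RtoC_2. ring.
Qed.

Lemma T_rec n : Tn (S (S (S n))) = RtoC 2 * E * Tn (S (S n)) - E * E * Tn (S n) + X * Tn n.
Proof. unfold Tn. rewrite A_rec, D_rec. ring. Qed.

Lemma T0 : Tn 0 = RtoC 3.
Proof. unfold Tn. rewrite A0, D0. ring. Qed.
Lemma T1 : Tn 1 = RtoC 5 * E.
Proof. unfold Tn. rewrite A1, D1. replace (RtoC 5) with (RtoC 3 + RtoC 2) by (rewrite <- RtoC_plus; f_equal; ring). ring. Qed.
Lemma T2 : Tn 2 = RtoC 7 * E * E.
Proof.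
  unfold Tn. rewrite (R1 0), (R2 1), A1, D1, D0.
  replace (RtoC 7) with (RtoC 3 + RtoC 2 * RtoC 2) by (rewrite <- RtoC_mult, <- RtoC_plus; f_equal; ring). ring.
Qed.

End Alg.

Section Pow.
Variables a b : C.
Let c := a + b.
Let E := / RtoC 2 * (Cpow a 2 + Cpow b 2 + Cpow c 2).
Let X := Cpow (a * b * c) 2.
Definition W n := Cpow c (2 * n + 3) - Cpow a (2 * n + 3) - Cpow b (2 * n + 3).

Lemma Cpow_k (x : C) n k : Cpow x (2 * (n + k) + 3) = Cpow x (2 * n + 3) * Cpow x (2 * k).
Proof. rewrite <- Cpow_add_r. f_equal. lia. Qed.

Lemma W_rec n : W (S (S (S n))) = RtoC 2 * E * W (S (S n)) - E * E * W (S n) + X * W n.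
Proof.
  unfold W. replace (S (S (S n))) with (n + 3)%nat by lia. replace (S (S n)) with (n + 2)%nat by lia.
  replace (S n) with (n + 1)%nat by lia. rewrite !Cpow_k.
  set (Pa := Cpow a (2 * n + 3)). set (Pb := Cpow b (2 * n + 3)). set (Pc := Cpow c (2 * n + 3)).
  unfold E, X, c. simpl. field. all: try (rewrite RtoC_2; intro H; apply (f_equal Re) in H; simpl in H; lra).
Qed.

Lemma W_T n : W n = a * b * c * Tn E X n.
Proof.
  assert (H : forall n, W n = a * b * c * Tn E X n /\ W (S n) = a * b * c * Tn E X (S n)
                        /\ W (S (S n)) = a * b * c * Tn E X (S (S n))).
  { induction n0.
    - rewrite T0, T1, T2. unfold W, E, c. simpl. repeat split.
      + rewrite RtoC_3. ring.
      + rewrite RtoC_5. field. all: try (rewrite RtoC_2; intro H; apply (f_equal Re) in H; simpl in H; lra).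
      + rewrite RtoC_7. field. all: try (rewrite RtoC_2; intro H; apply (f_equal Re) in H; simpl in H; lra).
    - destruct IHn0 as [H0 [H1 H2]]. split; auto. split; auto.
      rewrite W_rec, T_rec, H0, H1, H2. ring. }
  apply H.
Qed.
End Pow.

Lemma coef_id (E X : C) n i : (3 * i <= n)%nat ->
  RtoC (INR (2 * n + 3) / INR (2 * i + 1) * bc (n - i) (2 * i))%R * Cpow X i * Cpow E (n - 3 * i)
  = RtoC 3 * termA E X n i + RtoC 2 * E * termD E X n i.
Proof.
  intros H. unfold termA, termD.
  assert (Hs : INR (2 * i + 1) <> 0%R) by (apply not_0_INR; lia).
  destruct (Nat.eq_dec (3 * i) n) as [e|e].
  - rewrite (bc_zero (n - i) (2 * i + 1)) by lia.
    replace (INR (2 * n + 3) / INR (2 * i + 1))%R with 3%R.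
    2:{ subst n. rewrite !plus_INR, !mult_INR. simpl. field. rewrite plus_INR, mult_INR in Hs. simpl in Hs. lra. }
    rewrite RtoC_mult. ring.
  - replace (2 * i + 1)%nat with (S (2 * i)) by lia.
    rewrite (bc_absorb (n - i) (2 * i)) by lia.
    assert (HE : Cpow E (n - 3 * i) = E * Cpow E (n - 3 * i - 1)).
    { rewrite <- Cpow_S. f_equal. lia. }
    rewrite HE.
    set (B := bc (n - i) (2 * i)).
    assert (HR : (INR (2 * n + 3) / INR (S (2 * i)) * B
       = 3 * B + 2 * (INR (n - i - 2 * i) / INR (S (2 * i)) * B))%R).
    { replace (S (2 * i)) with (2 * i + 1)%nat by lia.
      replace (n - i - 2 * i)%nat with (n - 3 * i)%nat by lia.
      rewrite minus_INR by lia. rewrite !plus_INR, !mult_INR in *. simpl in *. field. lra. }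
    rewrite HR, !RtoC_plus, !RtoC_mult. ring.
Qed.

Lemma Cpow_pow2 (p : C) i : Cpow (Cpow (p / RtoC 2) 8) i * RtoC (2 ^ (8 * i)) = Cpow (Cpow p 8) i.
Proof.
  rewrite RtoC_pow, Cpow_mult_r, <- Cpow_mult_l, <- Cpow_mult_l. f_equal. f_equal. field.
  all: try (rewrite RtoC_2; intro H; apply (f_equal Re) in H; simpl in H; lra).
Qed.

Theorem theorem2p4 (z : C) (hz : (0 < Im z)%R) (n : nat) (hn : (0 < n)%nat) :
  rho n z =
  sum_n (fun i : nat =>
     RtoC (INR (2 * n + 3) / INR (2 * i + 1) * binomR (n - i) (2 * i)
           * 2 ^ (8 * i))%R
     * Cpow (Delta24 z) i * Cpow (E4 z) (n - 3 * i))
    (Nat.div n 3).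
Proof.
  destruct (Pnz_all z hz) as [N2 [N3 N4]].
  pose proof (jacobi z hz) as J.
  set (a := Cpow (theta2 z) 4) in *. set (b := Cpow (theta4 z) 4) in *.
  set (E := / RtoC 2 * (Cpow a 2 + Cpow b 2 + Cpow (a + b) 2)).
  set (X := Cpow (a * b * (a + b)) 2).
  assert (Hp : forall t, Cpow t (8 * (n + 1) + 4) = Cpow (Cpow t 4) (2 * n + 3)).
  { intro t. rewrite <- Cpow_mult_r. f_equal. lia. }
  assert (Hnz : a * b * (a + b) <> 0).
  { rewrite <- J. unfold a, b. apply Cmult_neq_0; [apply Cmult_neq_0|]; apply Cpow_nz; auto. }
  assert (L : rho n z = Tn E X n).
  { unfold rho. rewrite !Hp. fold a b. rewrite J.
    rewrite !Cpow_mult_l. fold a b. rewrite J.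
    pose proof (W_T a b n) as HW. unfold W in HW. cbv zeta in HW. fold E X in HW.
    rewrite HW. field. replace (a * (a + b) * b) with (a * b * (a + b)) by ring. repeat split; intro HH; apply Hnz; rewrite HH; ring. }
  rewrite L. rewrite sum_n_csum.
  assert (HE4 : E4 z = E).
  { unfold E4, E. rewrite <- J. fold a. 
    replace 8%nat with (4 * 2)%nat by reflexivity. rewrite !Cpow_mult_r. fold a b. ring. }
  assert (HX : forall i, RtoC (2 ^ (8 * i)) * Cpow (Delta24 z) i = Cpow X i).
  { intro i. unfold Delta24. rewrite Cmult_comm, Cpow_pow2.
    assert (HP : Cpow (theta2 z * theta3 z * theta4 z) 8 = X).
    { replace 8%nat with (4 * 2)%nat by reflexivity. rewrite Cpow_mult_r, !Cpow_mult_l. fold a b. rewrite J.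
      unfold X. f_equal. ring. }
    rewrite HP. reflexivity. }
  set (h := fun i => RtoC 3 * termA E X n i + RtoC 2 * E * termD E X n i).
  rewrite (csum_ext _ h).
  2:{ intros i Hi. unfold h. assert (H3 : (3 * i <= n)%nat).
      { assert (i <= n / 3)%nat by lia. pose proof (Nat.Div0.mul_div_le n 3). lia. }
      rewrite <- coef_id by auto. rewrite HE4, RtoC_mult, <- (HX i).
      unfold binomR. unfold bc. destruct (Nat.leb_spec (2 * i) (n - i)); [|lia]. ring. }
  rewrite <- (csum_extend h (S (n / 3)) (S n)).
  - unfold h, Tn, Asum, Dsum. rewrite csum_plus, !csum_scal. ring.
  - pose proof (Nat.div_le_upper_bound n 3 n). lia.
  - intros i Hi. assert (Hi3 : (n < 3 * i)%nat).
    { destruct Hi as [Hi _]. pose proof (Nat.div_mod n 3). pose proof (Nat.mod_upper_bound n 3). lia. }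
    unfold h, termA, termD. rewrite !bc_zero by lia. ring.
Qed.
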